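(* There exists a finite graph (without loops or parallel edges) which is not the dual graph of any pure simplicial complex.
   Context: A simplicial complex is pure if all its inclusion-maximal faces (facets) have the same dimension. The dual graph of a pure simplicial complex $\Delta$ has a vertex for each facet of $\Delta$, and two facets are adjacent iff they share a face of dimension one less than that of the facets. *)

(* Defs.v *)
From mathcomp Require Import all_boot.
Set Implicit Arguments. Unset Strict Implicit. Unset Printing Implicit Defensive.

Definition simplicial_complex (V : finType) (D : {set {set V}}) : Prop :=
  forall F G : {set V}, F \in D -> G \subset F -> G \in D.

Definition facet (V : finType) (D : {set {set V}}) (F : {set V}) : Prop :=
  F \in D /\ forall G : {set V}, G \in D -> F \subset G -> G = F.

(* Dimension of a face F is #|F| - 1; pure = all facets have the same dimension. *)
Definition pure (V : finType) (D : {set {set V}}) : Prop :=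
  forall F G : {set V}, facet D F -> facet D G -> #|F| = #|G|.

(* Adjacency in the dual graph: two distinct facets sharing a face of
   dimension one less than theirs, i.e. of cardinality #|F| - 1. *)
Definition dual_adj (V : finType) (D : {set {set V}}) (F G : {set V}) : Prop :=
  F <> G /\ exists S : {set V},
    [/\ S \in D, S \subset F, S \subset G & #|S| = (#|F| - 1)%N].

Definition is_dual_graph (T : finType) (e : rel T) (V : finType)
    (D : {set {set V}}) : Prop :=
  exists f : T -> {set V},
    [/\ injective f,
        (forall x, facet D (f x)),
        (forall F, facet D F -> exists x, f x = F) &
        (forall x y, e x y <-> dual_adj D (f x) (f y))].

(* Main.v *)
Require Import Defs.
From mathcomp Require Import all_boot.
From mathcomp Require Import zify.
Set Implicit Arguments. Unset Strict Implicit.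

Section Aux.
Variable V : finType.

Lemma upper_int (A B : {set V}) : #|A| = #|B| -> A <> B -> #|A :&: B| <= #|A| - 1.
Proof.
move=> eAB nAB.
have h : #|A :&: B| <= #|A| by apply: subset_leq_card; apply: subsetIl.
case: (ltngtP #|A :&: B| #|A|) h => // [lt|eq] _.
  by rewrite -(leq_add2r 1) subnK ?addn1 //; case: #|A| lt.
exfalso; apply: nAB.
have eI : A :&: B = A.
  by apply/eqP; rewrite eqEcard subsetIl eq leqnn.
have sAB : A \subset B by rewrite -eI subsetIr.
by apply/eqP; rewrite eqEcard sAB -eAB leqnn.
Qed.

Lemma adj_card (D : {set {set V}}) (A B : {set V}) :
  dual_adj D A B -> #|A| = #|B| -> A <> B /\ #|A :&: B| = #|A| - 1.
Proof.
move=> [nAB [S [_ sA sB cS]]] eAB; split => //.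
apply/eqP; rewrite eqn_leq upper_int //= -cS.
by apply: subset_leq_card; rewrite subsetI sA sB.
Qed.

Lemma card_adj (D : {set {set V}}) (A B : {set V}) :
  simplicial_complex D -> A \in D -> A <> B -> #|A :&: B| = #|A| - 1 ->
  dual_adj D A B.
Proof.
move=> sc AD nAB c; split => //; exists (A :&: B); split => //.
- by apply: (sc A) => //; apply: subsetIl.
- exact: subsetIl.
- exact: subsetIr.
Qed.

Lemma claim (d : nat) (Fc Fx Fy : {set V}) :
  #|Fc| = d -> #|Fx| = d -> #|Fy| = d -> 0 < d ->
  #|Fc :&: Fx| = d - 1 -> #|Fy :&: Fc| = d - 1 -> #|Fy :&: Fx| = d - 1 ->
  ~~ (Fy \subset Fc :|: Fx) -> Fc :&: Fx \subset Fy.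
Proof.
move=> cc cx cy d0 ccx cyc cyx /subsetPn [r rFy rU].
have rFc : r \notin Fc by apply: contra rU => h; rewrite in_setU h.
have rFx : r \notin Fx by apply: contra rU => h; rewrite in_setU h orbT.
have cD : #|Fy :\ r| = d - 1.
  by move: (cardsD1 r Fy); rewrite rFy cy => ->; rewrite add1n subn1.
have e1 : forall G : {set V}, r \notin G -> #|Fy :&: G| = d - 1 -> Fy :&: G = Fy :\ r.
  move=> G rG cG; apply/eqP; rewrite eqEcard cD cG leqnn andbT.
  apply/subsetP => z; rewrite !inE => /andP [zy zG]; rewrite zy andbT.
  by apply: contraNneq rG => <-.
have sI : Fy :\ r \subset Fc :&: Fx.
  rewrite -(e1 _ rFc cyc) subsetI subsetIr /=.
  by rewrite (e1 _ rFc cyc) -(e1 _ rFx cyx) subsetIr.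
have eI : Fy :\ r = Fc :&: Fx by apply/eqP; rewrite eqEcard sI ccx cD leqnn.
by rewrite -eI subsetDl.
Qed.

Lemma same_type (d : nat) (Fc Fx Fy Fz : {set V}) :
  #|Fc| = d -> #|Fx| = d -> #|Fy| = d -> #|Fz| = d -> 0 < d ->
  #|Fc :&: Fx| = d - 1 ->
  #|Fy :&: Fc| = d - 1 -> #|Fy :&: Fx| = d - 1 ->
  #|Fz :&: Fc| = d - 1 -> #|Fz :&: Fx| = d - 1 ->
  Fy <> Fz ->
  (Fy \subset Fc :|: Fx) = (Fz \subset Fc :|: Fx) ->
  #|Fy :&: Fz| = #|Fy| - 1.
Proof.
move=> cc cx cy cz d0 ccx cyc cyx czc czx nyz ht.
apply/eqP; rewrite eqn_leq upper_int ?cy ?cz //=.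
case hy: (Fy \subset Fc :|: Fx).
- have hz : Fz \subset Fc :|: Fx by rewrite -ht.
  have cU : #|Fc :|: Fx| = d.+1.
    move: (cardsUI Fc Fx); rewrite cc cx ccx => h.
    lia.
  have := cardsUI Fy Fz; rewrite cy cz => h.
  have hU : #|Fy :|: Fz| <= d.+1 by rewrite -cU; apply: subset_leq_card; rewrite subUset hy hz.
  have : d + d <= d.+1 + #|Fy :&: Fz| by rewrite -h leq_add2r.
  lia.
- have iy : Fc :&: Fx \subset Fy by apply: (claim cc cx cy d0 ccx cyc cyx); rewrite hy.
  have iz : Fc :&: Fx \subset Fz by apply: (claim cc cx cz d0 ccx czc czx); rewrite -ht hy.
  rewrite ?cy -ccx; apply: subset_leq_card; by rewrite subsetI iy iz.
Qed.

End Aux.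

Definition E5 : rel 'I_5 := fun i j => (i != j) && ((nat_of_ord i < 2) || (nat_of_ord j < 2)).

Theorem corollary4p2 :
  exists (T : finType) (e : rel T),
    [/\ symmetric e, irreflexive e &
        forall (V : finType) (D : {set {set V}}),
          simplicial_complex D -> pure D -> ~ is_dual_graph e D].
Proof.
exists ('I_5 : finType), E5; split.
- by move=> i j; rewrite /E5 eq_sym orbC.
- by move=> i; rewrite /E5 eqxx.
move=> V D sc pu [f [finj ffac fsurj fadj]].
pose v (k : nat) : 'I_5 := inord k.
have vE : forall k, k < 5 -> nat_of_ord (v k) = k by move=> k hk; rewrite inordK.
set d := #|f (v 0)|.
have cd : forall i, #|f i| = d by move=> i; apply: pu.
have adjI : forall i j, E5 i j -> #|f i :&: f j| = d - 1 /\ f i <> f j.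
  move=> i j /fadj h; have [] := adj_card h (etrans (cd i) (esym (cd j))).
  by rewrite cd.
have nadj : forall i j, i <> j -> #|f i :&: f j| = d - 1 -> E5 i j.
  move=> i j nij c; apply/fadj; apply: card_adj => //; first by case: (ffac i).
    by move=> /finj.
  by rewrite cd.
have e01 : E5 (v 0) (v 1) by rewrite /E5 -(inj_eq val_inj) /= !vE.
have [c01 n01] := adjI _ _ e01.
have d0 : 0 < d.
  rewrite lt0n; apply/negP => /eqP d0; apply: n01.
  by rewrite (cards0_eq (etrans (cd _) d0)) (cards0_eq (etrans (cd _) d0)).
have yc : forall k, 2 <= k < 5 -> #|f (v k) :&: f (v 0)| = d - 1.
  by move=> k /andP [h1 h2]; apply: (adjI _ _ _).1; rewrite /E5 !vE //= orbT andbT;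
     apply/eqP => /(congr1 val); rewrite /= !vE //; move=> ek; move: h1; rewrite ek.
have yx : forall k, 2 <= k < 5 -> #|f (v k) :&: f (v 1)| = d - 1.
  by move=> k /andP [h1 h2]; apply: (adjI _ _ _).1; rewrite /E5 !vE //= orbT andbT;
     apply/eqP => /(congr1 val); rewrite /= !vE //; move=> ek; move: h1; rewrite ek.
have pair : forall k l, 2 <= k < 5 -> 2 <= l < 5 -> k != l ->
    (f (v k) \subset f (v 0) :|: f (v 1)) = (f (v l) \subset f (v 0) :|: f (v 1)) -> False.
  move=> k l hk hl nkl ht.
  have nv : v k <> v l.
    move=> /(congr1 val); rewrite /= !vE //; [by apply/eqP| by case/andP: hl|by case/andP: hk].
  have := same_type (cd _) (cd _) (cd _) (cd _) d0 c01 (yc _ hk) (yx _ hk) (yc _ hl) (yx _ hl)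
           (fun h => nv (finj _ _ h)) ht.
  rewrite cd => /(nadj _ _ nv); rewrite /E5.
  case/andP: hk => hk1 hk2; case/andP: hl => hl1 hl2.
  by rewrite !vE // (leq_gtF hk1) (leq_gtF hl1) andbF.
case h2: (f (v 2) \subset f (v 0) :|: f (v 1));
case h3: (f (v 3) \subset f (v 0) :|: f (v 1));
case h4: (f (v 4) \subset f (v 0) :|: f (v 1)).
all: first [ by apply: (pair 2 3) => //; rewrite h2 h3
           | by apply: (pair 2 4) => //; rewrite h2 h4
           | by apply: (pair 3 4) => //; rewrite h3 h4 ].
Qed.
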